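(* If a fragment $F$ was in the work state and remained active in wait state, it will enter the work state again only after each and every one of its neighboring fragments has been in the work state as well.
   Context: A broadcast network is modeled as a connected graph G(V,E) with n nodes. In the fragment-level leader election algorithm, nodes are partitioned into fragments each with a candidate; id(F) = (size, candidate identity) ordered lexicographically; an external edge between F1 and F2 with id(F1) > id(F2) is outgoing for F1 and incoming for F2. Initially each node is a size-1 fragment in state wait. A fragment with an outgoing edge is in wait; a fragment in wait whose external edges are all incoming moves to work, counts its size new_size and compares with its maximal neighbor F': if new_size > X · size(F') (X > 1) it remains active, updates its size, all of its external edges become outgoing, and it goes to wait; otherwise it joins F' (edges to F' become internal). A fragment with no external edges is the leader. While in wait a fragment does nothing; its edges change only through neighbors' actions (joining it or changing their size). *)

(* Defs.v *)
From HB Require Import structures.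
From mathcomp Require Import all_boot all_order all_algebra.
Set Implicit Arguments. Unset Strict Implicit. Unset Printing Implicit Defensive.
Import Order.TTheory GRing.Theory Num.Theory.

Inductive fstate := Wait | Work | Leader.

Section Model.
Variables (V : finType).

(* A configuration: every node points to the candidate of its fragment;
   fragments are identified by their candidate node.  The stored size and
   the state of a fragment are read at its candidate. *)
Record config := Config {
  cand  : V -> V;
  fsize : V -> nat;
  fst   : V -> fstate }.

Definition upd {A : Type} (h : V -> A) (x : V) (a : A) : V -> A :=
  fun y => if y == x then a else h y.

Variable ident : V -> nat.
Variable adj : rel V.

Definition is_frag (c : config) (f : V) : bool := cand c f == f.

Definition members (c : config) (f : V) : {set V} := [set v | cand c v == f].

Definition lt_id (c : config) (f g : V) : bool :=
  (fsize c f < fsize c g)%N ||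
  ((fsize c f == fsize c g) && (ident f < ident g)%N).

Definition neighbor (c : config) (f g : V) : bool :=
  [&& is_frag c f, is_frag c g, f != g &
      [exists u, exists v, [&& cand c u == f, cand c v == g & adj u v]]].

Definition has_ext (c : config) (f : V) : Prop := exists g, neighbor c f g.

Definition all_incoming (c : config) (f : V) : Prop :=
  forall g, neighbor c f g -> lt_id c f g.

Definition max_neighbor (c : config) (f g : V) : Prop :=
  neighbor c f g /\ forall h, neighbor c f h -> h != g -> lt_id c h g.

Definition init_config : config :=
  Config (fun v => v) (fun _ => 1%N) (fun _ => Wait).

Variables (R : realFieldType) (X : R).

Inductive step (c : config) : config -> Prop :=
  | step_wake f :
      is_frag c f -> fst c f = Wait -> has_ext c f -> all_incoming c f ->
      step c (Config (cand c) (fsize c) (upd (fst c) f Work))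
  | step_leader f :
      is_frag c f -> fst c f = Wait -> ~ has_ext c f ->
      step c (Config (cand c) (fsize c) (upd (fst c) f Leader))
  | step_active f g :
      is_frag c f -> fst c f = Work -> max_neighbor c f g ->
      (X * (fsize c g)%:R < (#|members c f|)%:R)%R ->
      step c (Config (cand c) (upd (fsize c) f #|members c f|)
                     (upd (fst c) f Wait))
  | step_join f g :
      is_frag c f -> fst c f = Work -> max_neighbor c f g ->
      ~~ (X * (fsize c g)%:R < (#|members c f|)%:R)%R ->
      step c (Config (fun v => if cand c v == f then g else cand c v)
                     (fsize c) (fst c)).

End Model.

(* Main.v *)
Require Import Defs.
From HB Require Import structures.
From mathcomp Require Import all_boot all_order all_algebra.
Import Order.TTheory GRing.Theory Num.Theory.
From Stdlib Require Import Classical.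
From mathcomp Require Import zify.
Lemma step_pres (R : realFieldType) (X : R) (V : finType) (ident : V -> nat)
  (adj : rel V) (c c' : config V) (f h : V) (A B : nat) :
  step ident adj X c c' -> ~ (is_frag c h /\ fst c h = Work) ->
  is_frag c f -> is_frag c h -> neighbor adj c f h ->
  fsize c f = A -> fsize c h = B -> (B < A)%N -> fst c f <> Work ->
  [/\ is_frag c' f && is_frag c' h, neighbor adj c' f h, fsize c' f = A,
      fsize c' h = B & fst c' f <> Work].
Proof.
move=> st Hh Hf Hhf Hn HA HB HBA Hw.
have Hfh : f != h by case/and4P: Hn.
case: c' / st.
- move=> g Hg Hgw _ Hinc /=; split => //; first by apply/andP.
  rewrite /upd; case: (f =P g) => [E|_ //].
  subst g; have := Hinc h Hn; rewrite /lt_id HA HB.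
  by move=> /orP [H|/andP [/eqP H _]] _; lia.
- move=> g Hg Hgw _ /=; split => //; first by apply/andP.
  by rewrite /upd; case: (f =P g).
- move=> g g' Hg Hgw _ _ /=.
  have gf : g != f by apply/eqP => E; apply: Hw; rewrite -E; exact: Hgw.
  have gh : g != h by apply/eqP => E; apply: Hh; rewrite -E; split.
  rewrite /upd eq_sym (negbTE gf) eq_sym (negbTE gh); split => //.
  by apply/andP.
- move=> g g' Hg Hgw _ _ /=.
  have gf : g != f by apply/eqP => E; apply: Hw; rewrite -E; exact: Hgw.
  have gh : g != h by apply/eqP => E; apply: Hh; rewrite -E; split.
  move: Hf Hhf Hn; rewrite /is_frag /neighbor /is_frag => /eqP Hf /eqP Hhf.
  case/and4P => _ _ _ /existsP [u /existsP [v /and3P [/eqP Hu /eqP Hv Huv]]].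
  have fg : (f == g) = false by rewrite eq_sym (negbTE gf).
  have hg : (h == g) = false by rewrite eq_sym (negbTE gh).
  rewrite /= Hf Hhf fg hg !eqxx Hfh /=.
  split => //.
  apply/existsP; exists u; apply/existsP; exists v.
  by rewrite Hu Hv fg hg !eqxx Huv.
Qed.
Lemma step_base (R : realFieldType) (X : R) (hX : (1 < X)%R) (V : finType) (ident : V -> nat)
  (adj : rel V) (c c' : config V) (f h : V) :
  step ident adj X c c' -> is_frag c f -> fst c f = Work -> fst c' f = Wait ->
  neighbor adj c f h ->
  [/\ is_frag c' f && is_frag c' h, neighbor adj c' f h & (fsize c' h < fsize c' f)%N].
Proof.
move=> st Hf Hw Hw' Hn.
have Hfh : f != h by case/and4P: Hn.
have Hhf : is_frag c h by case/and4P: Hn.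
case: c' / st Hw'.
- by move=> g _ _ _ _ /=; rewrite /upd; case: (f =P g); rewrite ?Hw.
- by move=> g _ _ _ /=; rewrite /upd; case: (f =P g); rewrite ?Hw.
- move=> g g' Hg Hgw [Hng' Hmax] HXl /=; rewrite /upd.
  case: (f =P g) => [E _|]; last by rewrite Hw.
  have hf : (h == f) = false by rewrite eq_sym (negbTE Hfh).
  subst g; rewrite /= hf; split => //; first by apply/andP.
  have Hg'M : (fsize c g' < #|members c f|)%N.
    rewrite -(ltr_nat R); apply: le_lt_trans HXl.
    by rewrite ler_peMl // ltW.
  case: (h =P g') => [->//|/eqP hg'].
  have := Hmax h Hn hg'; rewrite /lt_id => /orP [H|/andP [/eqP H _]]; lia.
- by move=> g g' _ _ _ _ /=; rewrite Hw.
Qed.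

Theorem lemma3 (R : realFieldType) (X : R) (hX : (1 < X)%R)
  (V : finType) (ident : V -> nat) (hid : injective ident)
  (adj : rel V) (hsym : symmetric adj) (hirr : irreflexive adj)
  (hconn : forall u v, connect adj u v)
  (e : nat -> config V) (t1 t2 : nat)
  (h0 : e 0%N = init_config V)
  (hstep : forall i, (i < t2)%N -> step ident adj X (e i) (e i.+1))
  (f : V)
  (hwork1 : is_frag (e t1) f /\ fst (e t1) f = Work)
  (hactive : is_frag (e t1.+1) f /\ fst (e t1.+1) f = Wait)
  (ht : (t1 < t2)%N)
  (hwork2 : is_frag (e t2) f /\ fst (e t2) f = Work) :
  forall h, neighbor adj (e t1) f h ->
    exists s, [/\ (t1 < s < t2)%N, is_frag (e s) h & fst (e s) h = Work].
Proof.
move=> h Hn; apply: NNPP => Hno.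
have HNW : forall s, (t1 < s < t2)%N -> ~ (is_frag (e s) h /\ fst (e s) h = Work).
  by move=> s Hs [H1 H2]; apply: Hno; exists s.
have [/andP [Hf1 Hh1] Hn1 HBA] :=
  @step_base R X hX _ _ _ _ _ f h (hstep t1 ht) hwork1.1 hwork1.2 hactive.2 Hn.
have inv : forall k, (t1.+1 + k <= t2)%N ->
  [/\ is_frag (e (t1.+1 + k)) f && is_frag (e (t1.+1 + k)) h,
      neighbor adj (e (t1.+1 + k)) f h,
      fsize (e (t1.+1 + k)) f = fsize (e t1.+1) f,
      fsize (e (t1.+1 + k)) h = fsize (e t1.+1) h &
      fst (e (t1.+1 + k)) f <> Work].
  elim => [|k IH] Hk.
    rewrite addn0; split => //; first by apply/andP.
    by rewrite hactive.2.
  have Hk' : (t1.+1 + k < t2)%N by rewrite -addnS.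
  have [/andP [a b] c d g w] := IH (ltnW Hk').
  rewrite addnS.
  apply: (@step_pres _ _ _ _ _ _ _ f h _ _ (hstep _ Hk') _ a b c d g HBA w).
  by apply: HNW; apply/andP; split => //; lia.
have E : (t1.+1 + (t2 - t1.+1))%N = t2 by rewrite subnKC.
have := inv (t2 - t1.+1); rewrite E => H.
have [_ _ _ _ w] := H (leqnn t2).
exact: (w hwork2.2).
Qed.
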